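(* Let $a\ge 4$ and $b\ge 5$ be integers, let $n=a+b-2$, and consider the 2-connected $(a,b)$-puzzle on $V=\{1,\dots,n\}$, i.e. the cycle set consisting of the two cycles $\alpha=(1\ 2\ \dots\ a)$ and $\beta=(a-1\ a\ a+1\ \dots\ n)$. Then any even permutation of $V$ can be generated in $O(n^2)$ shifts; that is, there is an absolute constant $K$ (independent of $a,b$) such that every even permutation of $V$ is a product of at most $Kn^2$ factors, each of which is one of $\alpha,\alpha^{-1},\beta,\beta^{-1}$.
   Context: Permutations are written in cycle notation. A shift along a cycle $(v_1\ \dots\ v_j)$ corresponds to applying the permutation $(v_1\ \dots\ v_j)$ or its inverse to the tokens placed on the vertices of $V$. *)

(* Defs.v *)
From mathcomp Require Import all_boot all_fingroup zify.
Set Implicit Arguments. Unset Strict Implicit. Unset Printing Implicit Defensive.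

(* Vertices 1..n of the paper are represented 0-indexed by 'I_n (vertex v is v-1). *)

Definition cyc_nat (lo hi i : nat) : nat :=
  if (lo <= i) && (i.+1 < hi) then i.+1
  else if (i.+1 == hi) && (lo < hi) then lo else i.

Lemma cyc_nat_inj lo hi : injective (cyc_nat lo hi).
Proof.
move=> i j; rewrite /cyc_nat.
case: ifP => /andP; case: ifP => /andP; try case: ifP => /andP;
  try case: ifP => /andP; move=> *; lia.
Qed.

Lemma cyc_nat_lt lo hi n i : hi <= n -> i < n -> cyc_nat lo hi i < n.
Proof. rewrite /cyc_nat; case: ifP => /andP; try case: ifP => /andP; lia. Qed.

Definition cyc_fun (n lo hi : nat) (i : 'I_n) : 'I_n :=
  if hi <= n then insubd i (cyc_nat lo hi i) else i.

Lemma cyc_fun_inj n lo hi : injective (@cyc_fun n lo hi).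
Proof.
move=> i j; rewrite /cyc_fun; case: ifP => hn //.
move/(congr1 val); rewrite !val_insubd !(cyc_nat_lt lo hn (ltn_ord _)) => H.
by apply: val_inj; apply: (@cyc_nat_inj lo hi).
Qed.

Definition cycle_perm (n lo hi : nat) : {perm 'I_n} := perm (@cyc_fun_inj n lo hi).

(* The (a,b)-puzzle on n = a+b-2 vertices:
   alpha = (1 2 ... a), beta = (a-1 a ... n)   (1-indexed, as in the paper). *)
Definition alpha (a b : nat) : {perm 'I_(a + b - 2)} := cycle_perm (a + b - 2) 0 a.
Definition beta (a b : nat) : {perm 'I_(a + b - 2)} := cycle_perm (a + b - 2) (a - 2) (a + b - 2).

(* Main.v *)
Require Import Defs.
From mathcomp Require Import all_boot all_fingroup.
From mathcomp Require Import zify.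
Set Implicit Arguments. Unset Strict Implicit. Unset Printing Implicit Defensive.

Section Gen.
Local Open Scope group_scope.
Variable T : finType.

Definition tc (p q r : T) : {perm T} := tperm p q * tperm p r.

Ltac ceq z := repeat (match goal with |- context [z == ?y] =>
  case: (z =P y) => [?|?]; [subst z|]; cbv iota end; try congruence);
  repeat (match goal with |- context [?x == ?y] => is_var x; is_var y;
  case: (x =P y) => [?|?]; try subst; cbv iota end; try congruence).

Lemma tpermE' (x y z : T) : tperm x y z = if z == x then y else if z == y then x else z.
Proof.
case: (z =P x) => [?|/eqP zx]; first by subst;  rewrite tpermL.
case: (z =P y) => [?|/eqP zy]; first by subst;  rewrite tpermR.
by rewrite tpermD // eq_sym.
Qed.

Lemma tcE p q r z : p != q -> p != r -> q != r ->
  tc p q r z = if z == p then q else if z == q then r else if z == r then p else z.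
Proof. move=> /eqP pq /eqP pr /eqP qr; rewrite /tc permM !tpermE'; ceq z. Qed.

Lemma tcJ p q r (g : {perm T}) : tc p q r ^ g = tc (g p) (g q) (g r).
Proof. by rewrite /tc conjMg !tpermJ. Qed.

Lemma tc_odd p q r : p != q -> p != r -> odd_perm (tc p q r) = false.
Proof. by move=> pq pr; rewrite /tc odd_permM !odd_tperm pq pr. Qed.

Lemma tc_rot p q r : p != q -> p != r -> q != r -> tc p q r = tc q r p.
Proof.
move=> pq pr qr; apply/permP => z.
have qp : q != p by rewrite eq_sym.
have rp : r != p by rewrite eq_sym.
rewrite !tcE //.
move: pq pr qr => /eqP pq /eqP pr /eqP qr; ceq z.
Qed.

Lemma ttc r s v x y : x != y -> x != r -> x != s -> x != v -> y != r -> y != s -> y != v ->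
  r != s -> r != v -> s != v ->
  tperm x y * tperm r s * (tperm x y * tperm s v) = tc r v s.
Proof.
move=> h1 h2 h3 h4 h5 h6 h7 h8 h9 h10; apply/permP => z.
rewrite tcE //; last by rewrite eq_sym.
rewrite !permM !tpermE'.
move: h1 h2 h3 h4 h5 h6 h7 h8 h9 h10 => /eqP ? /eqP ? /eqP ? /eqP ? /eqP ? /eqP ? /eqP ? /eqP ? /eqP ? /eqP ?; ceq z.
Qed.

Variable gs : seq {perm T}.
Hypothesis gsV : forall g, g \in gs -> g^-1 \in gs.

Definition reach (L : nat) (g : {perm T}) :=
  exists w : seq {perm T}, all (fun h => h \in gs) w /\ size w <= L /\ g = \prod_(h <- w) h.

Lemma reach_mono L L' g : L <= L' -> reach L g -> reach L' g.
Proof. move=> h [w [h1 [h2 h3]]]; exists w; split => //; split => //; lia. Qed.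

Lemma reach1 L : reach L 1.
Proof. by exists [::]; rewrite big_nil. Qed.

Lemma reach_gen g : g \in gs -> reach 1 g.
Proof. by move=> h; exists [:: g]; rewrite /= h big_seq1. Qed.

Lemma reach_mul L1 L2 g h : reach L1 g -> reach L2 h -> reach (L1 + L2) (g * h).
Proof.
move=> [w1 [a1 [s1 ->]]] [w2 [a2 [s2 ->]]]; exists (w1 ++ w2).
rewrite all_cat a1 a2 size_cat big_cat; split => //; split => //; lia.
Qed.

Lemma prod_rev_inv (w : seq {perm T}) :
  \prod_(h <- rev (map invg w)) h = (\prod_(h <- w) h)^-1.
Proof.
elim: w => [|x w IH]; first by rewrite !big_nil invg1.
by rewrite /= rev_cons -cats1 big_cat big_seq1 big_cons IH invMg.
Qed.

Lemma reach_inv L g : reach L g -> reach L g^-1.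
Proof.
move=> [w [a1 [s1 ->]]]; exists (rev (map invg w)).
rewrite all_rev all_map size_rev size_map prod_rev_inv; split => //.
by apply/allP => x /(allP a1) /= /gsV.
Qed.

Lemma reach_conj Lc Lg c g : reach Lc c -> reach Lg g -> reach (Lc + 2 * Lg) (c ^ g).
Proof.
move=> hc hg; rewrite conjgE.
apply: reach_mono (reach_mul (reach_inv hg) (reach_mul hc hg)); lia.
Qed.

Lemma reach_exp g k : g \in gs -> reach k (g ^+ k).
Proof.
move=> hg; elim: k => [|k IH]; first by rewrite expg0; apply: reach1.
by rewrite expgS; apply: (reach_mul (reach_gen hg) IH).
Qed.


Lemma fix_all (P Q : T) (s : {perm T}) : P != Q ->
  (forall z, z != P -> z != Q -> s z = z) -> ~~ odd_perm s -> s = 1.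
Proof.
move=> PQ hs hodd.
have sinj := @perm_inj _ s.
case: (eqVneq (s P) P) => sP.
  have sQ : s Q = Q.
    case: (eqVneq (s Q) P) => e1.
      by move: PQ; rewrite (sinj _ _ (etrans e1 (esym sP))) eqxx.
    case: (eqVneq (s Q) Q) => e2 //.
    by have := hs _ e1 e2 => /sinj /eqP; rewrite (negbTE e2).
  apply/permP => z; rewrite perm1.
  case: (eqVneq z P) => [->//|zP]; case: (eqVneq z Q) => [->//|zQ].
  exact: hs.
have sPQ : s P = Q.
  case: (eqVneq (s P) Q) => // e.
  by have := hs _ sP e => /sinj /eqP; rewrite (negbTE sP).
have sQP : s Q = P.
  case: (eqVneq (s Q) P) => // e1.
  case: (eqVneq (s Q) Q) => e2.
    by move: PQ; rewrite (sinj _ _ (etrans e2 (esym sPQ))) eqxx.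
  by have := hs _ e1 e2 => /sinj /eqP; rewrite (negbTE e2).
have : s = tperm P Q.
  apply/permP => z; rewrite tpermE'.
  case: (eqVneq z P) => [->//|zP]; case: (eqVneq z Q) => [->//|zQ].
  exact: hs.
by move=> e; move: hodd; rewrite e odd_tperm PQ.
Qed.

Definition mv (P Q : T) (s : {perm T}) := [set x | (x != P) && (x != Q) && (s x != x)].

Lemma step_c (P Q : T) L x y : P != Q -> x != P -> x != Q -> y != x ->
  (forall u, u != P -> u != Q -> reach L (tc P Q u)) ->
  exists c : {perm T}, [/\ reach (2 * L) c, odd_perm c = false, c y = x &
     forall z, z != P -> z != Q -> z != x -> z != y -> c z = z].
Proof.
move=> PQ xP xQ yx hL.
have Px : P != x by rewrite eq_sym.
have Qx : Q != x by rewrite eq_sym.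
have tx z : z != P -> z != Q -> z != x -> tc P Q x z = z.
  by move=> zP zQ zx; rewrite (tcE z PQ Px Qx) (negbTE zP) (negbTE zQ) (negbTE zx).
have txi z : z != P -> z != Q -> z != x -> (tc P Q x)^-1 z = z.
  by move=> zP zQ zx; apply: (@perm_inj _ (tc P Q x)); rewrite permKV tx.
have txP : (tc P Q x)^-1 P = x.
  have e : tc P Q x x = P by rewrite (tcE x PQ Px Qx) (negbTE xP) (negbTE xQ) eqxx.
  by apply: (@perm_inj _ (tc P Q x)); rewrite permKV e.
case: (eqVneq y P) => [yP|yP].
  exists (tc P Q x)^-1; split.
  - by apply: reach_mono (reach_inv (hL x xP xQ)); lia.
  - by rewrite odd_permV tc_odd.
  - by rewrite yP.
  - by move=> z zP zQ zx _; apply: txi.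
case: (eqVneq y Q) => [yQ|yQ].
  exists (tc P Q x); split.
  - by apply: reach_mono (hL x xP xQ); lia.
  - by rewrite tc_odd.
  - by rewrite yQ (tcE Q PQ Px Qx) eq_sym (negbTE PQ) eqxx.
  - by move=> z zP zQ zx _; apply: tx.
have Py : P != y by rewrite eq_sym.
have Qy : Q != y by rewrite eq_sym.
exists (tc P Q y * (tc P Q x)^-1); split.
- by apply: reach_mono (reach_mul (hL y yP yQ) (reach_inv (hL x xP xQ))); lia.
- by rewrite odd_permM odd_permV !tc_odd.
- by rewrite permM (tcE y PQ Py Qy) (negbTE yP) (negbTE yQ) eqxx txP.
- move=> z zP zQ zx zy; rewrite permM.
  by rewrite (tcE z PQ Py Qy) (negbTE zP) (negbTE zQ) (negbTE zy) txi.
Qed.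

Lemma reduce (P Q : T) L : P != Q ->
  (forall u, u != P -> u != Q -> reach L (tc P Q u)) ->
  forall s, ~~ odd_perm s -> reach (2 * L * #|T|) s.
Proof.
move=> PQ hL.
suff H : forall k s, ~~ odd_perm s -> #|mv P Q s| <= k -> reach (2 * L * k) s.
  by move=> s hs; apply: H => //; apply: max_card.
elim=> [|k IH] s hs hk.
  have -> : s = 1; last exact: reach1.
  apply: (fix_all PQ) => // z zP zQ; apply/eqP; apply/negPn/negP => zs.
  have : z \in mv P Q s by rewrite inE zP zQ zs.
  by move: hk; rewrite leqn0 cards_eq0 => /eqP ->; rewrite inE.
case: (set_0Vmem (mv P Q s)) => [e|[x xin]].
  have -> : s = 1; last exact: reach1.
  apply: (fix_all PQ) => // z zP zQ; apply/eqP; apply/negPn/negP => zs.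
  have : z \in mv P Q s by rewrite inE zP zQ zs.
  by rewrite e inE.
move: (xin); rewrite inE => /andP[/andP[xP xQ] sx].
have [c [rc oc cy cz]] := step_c PQ xP xQ sx hL.
have -> : s = (s * c) * c^-1 by rewrite mulgK.
have -> : (2 * L * k.+1 = 2 * L * k + 2 * L)%N by rewrite mulnS addnC.
apply: reach_mul; last exact: reach_inv.
apply: IH; first by rewrite odd_permM oc addbF.
have sub : mv P Q (s * c) \subset mv P Q s :\ x.
  apply/subsetP => z; rewrite !inE permM => /andP[/andP[zP zQ] zs].
  rewrite zP zQ /=.
  case: (eqVneq z x) => [ezx|zx]; first by move: zs; rewrite ezx cy eqxx.
  rewrite /=; apply/negP => /eqP szz.
  have zsx : z != s x.
    apply/negP => /eqP ezs; move/eqP: zx; apply.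
    by apply: (@perm_inj _ s); rewrite szz.
  by move: zs; rewrite szz cz ?eqxx.
have := subset_leq_card sub.
move: hk; rewrite (cardsD1 x (mv P Q s)) xin /= => hk h; lia.
Qed.

End Gen.

Lemma Echeck a b y : 4 <= a -> 5 <= b -> y < a + b - 2 ->
  cyc_nat (a-2) (a+b-2) (cyc_nat 0 a y) =
  cyc_nat 0 a (let z := cyc_nat (a-2) (a+b-2) y in
     if z == a-3 then a-2 else if z == a-2 then a-3 else if z == a-1 then a else if z == a then a-1 else z).
Proof.
move=> ha hb hy; rewrite /cyc_nat /=.
repeat case: ifP; move=> *; lia.
Qed.

Lemma ex_ord n k : k < n -> exists p : 'I_n, val p = k.
Proof. by move=> h; exists (Ordinal h). Qed.

Lemma ordne n (p q : 'I_n) : val p != val q -> p != q.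
Proof. by apply: contra => /eqP ->. Qed.

Lemma tpermV n (p q z : 'I_n) :
  val (tperm p q z) = if val z == val p then val q else if val z == val q then val p else val z.
Proof. by rewrite tpermE' !val_eqE; case: ifP => //; case: ifP. Qed.

Section Conc.
Local Open Scope group_scope.
Variables a b : nat.
Hypotheses (ha : 4 <= a) (hb : 5 <= b).
Local Notation n := (a + b - 2).
Local Notation al := (alpha a b).
Local Notation be := (beta a b).
Definition gs := [:: al; al^-1; be; be^-1].

Lemma gsV g : g \in gs -> g^-1 \in gs.
Proof. by rewrite !inE => /or4P[] /eqP ->; rewrite ?invgK eqxx ?orbT. Qed.

Lemma alV (x : 'I_n) : val (al x) = cyc_nat 0 a x.
Proof.
have h : a <= n by lia.
by rewrite /alpha /cycle_perm permE /cyc_fun h val_insubd (cyc_nat_lt 0 h (ltn_ord x)).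
Qed.

Lemma beV (x : 'I_n) : val (be x) = cyc_nat (a-2) n x.
Proof.
have h : n <= n by [].
by rewrite /beta /cycle_perm permE /cyc_fun h val_insubd (cyc_nat_lt (a-2) h (ltn_ord x)).
Qed.

Lemma al_fix (x : 'I_n) : a <= x -> al x = x.
Proof. move=> h; apply: val_inj; rewrite alV /cyc_nat /=; repeat case: ifP; move=> *; lia. Qed.

Lemma be_fix (x : 'I_n) : x < a - 2 -> be x = x.
Proof. move=> h; apply: val_inj; rewrite beV /cyc_nat /=; repeat case: ifP; move=> *; lia. Qed.

Lemma al_pow_fix j (x : 'I_n) : a <= x -> (al ^+ j) x = x.
Proof.
move=> h; elim: j => [|j IH]; first by rewrite expg0 perm1.
by rewrite expgS permM al_fix.
Qed.

Lemma be_pow_fix j (x : 'I_n) : x < a - 2 -> (be ^+ j) x = x.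
Proof.
move=> h; elim: j => [|j IH]; first by rewrite expg0 perm1.
by rewrite expgS permM be_fix.
Qed.

Lemma al_pow_up j (x : 'I_n) : x + j < a -> val ((al ^+ j) x) = x + j.
Proof.
elim: j x => [|j IH] x h; first by rewrite expg0 perm1 addn0.
rewrite expgS permM IH alV; rewrite /cyc_nat; repeat case: ifP; move=> *; lia.
Qed.

Lemma be_pow_up j (x : 'I_n) : a - 2 <= x -> x + j < n -> val ((be ^+ j) x) = x + j.
Proof.
elim: j x => [|j IH] x h1 h2; first by rewrite expg0 perm1 addn0.
rewrite expgS permM IH beV; rewrite /cyc_nat; repeat case: ifP; move=> *; lia.
Qed.


Ltac cnl := rewrite /cyc_nat /=; repeat case: ifP; move=> *; lia.

Lemma alE (x y : 'I_n) : cyc_nat 0 a x = y -> al x = y.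
Proof. by move=> h; apply: val_inj; rewrite alV. Qed.

Lemma beE (x y : 'I_n) : cyc_nat (a-2) n x = y -> be x = y.
Proof. by move=> h; apply: val_inj; rewrite beV. Qed.

Lemma invE (s : {perm 'I_n}) x y : s y = x -> s^-1 x = y.
Proof. by move=> <-; rewrite permK. Qed.

Lemma rgen g : g \in gs -> reach gs 1 g.
Proof. exact: reach_gen. Qed.

Section Pts.
Variables p4 p3 p2 p1 p0 p5 p6 : 'I_n.
Hypotheses (v4 : val p4 = a - 4) (v3 : val p3 = a - 3) (v2 : val p2 = a - 2)
  (v1 : val p1 = a - 1) (v0 : val p0 = a) (v5 : val p5 = a + 1) (v6 : val p6 = a + 2).

Lemma D_eq : be^-1 * al * be * al^-1 = tperm p3 p2 * tperm p1 p0.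
Proof.
have E : al * be = be * (tperm p3 p2 * tperm p1 p0) * al.
  apply/permP => x; apply: val_inj.
  rewrite !permM !beV !alV !tpermV !beV v3 v2 v1 v0.
  have hx := ltn_ord x.
  move: (nat_of_ord x) hx => y hy.
  rewrite /cyc_nat /=; repeat case: ifP; move=> *; lia.
by rewrite -(mulgA _ al be) E !mulgA mulVg mul1g mulgK.
Qed.

Lemma reach_D : reach gs 4 (tperm p3 p2 * tperm p1 p0).
Proof.
rewrite -D_eq.
apply: (reach_mul (L1 := 3)); last by apply: rgen; rewrite !inE eqxx ?orbT.
apply: (reach_mul (L1 := 2)); last by apply: rgen; rewrite !inE eqxx ?orbT.
by apply: (reach_mul (L1 := 1)); apply: rgen; rewrite !inE eqxx ?orbT.
Qed.

Definition gw := al^-1 * be * be * al.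

Lemma reach_gw : reach gs 4 gw.
Proof.
rewrite /gw.
apply: (reach_mul (L1 := 3)); last by apply: rgen; rewrite !inE eqxx ?orbT.
apply: (reach_mul (L1 := 2)); last by apply: rgen; rewrite !inE eqxx ?orbT.
by apply: (reach_mul (L1 := 1)); apply: rgen; rewrite !inE eqxx ?orbT.
Qed.

Lemma gw3 : gw p3 = p3.
Proof.
rewrite /gw !permM (invE (y := p4)); last by apply: alE; rewrite v4 v3; cnl.
rewrite (be_fix (x := p4)) ?v4; last lia.
rewrite (be_fix (x := p4)) ?v4; last lia.
by apply: alE; rewrite v4 v3; cnl.
Qed.

Lemma gw2 : gw p2 = p2.
Proof.
rewrite /gw !permM (invE (y := p3)); last by apply: alE; rewrite v3 v2; cnl.
rewrite (be_fix (x := p3)) ?v3; last (simpl; lia).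
rewrite (be_fix (x := p3)) ?v3; last (simpl; lia).
by apply: alE; rewrite v3 v2; cnl.
Qed.

Lemma gw1 : gw p1 = p0.
Proof.
rewrite /gw !permM (invE (y := p2)); last by apply: alE; rewrite v2 v1; cnl.
rewrite (beE (x := p2) (y := p1)); last by rewrite v2 v1; cnl.
rewrite (beE (x := p1) (y := p0)); last by rewrite v1 v0; cnl.
by apply: alE; rewrite v0; cnl.
Qed.

Lemma gw0 : gw p0 = p6.
Proof.
rewrite /gw !permM (invE (y := p0)); last by apply: alE; rewrite v0; cnl.
rewrite (beE (x := p0) (y := p5)); last by rewrite v0 v5; cnl.
rewrite (beE (x := p5) (y := p6)); last by rewrite v5 v6; cnl.
by apply: alE; rewrite v6; cnl.
Qed.

Lemma reach_K : reach gs 16 (tc p6 p0 p1).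
Proof.
have dist : forall (p q : 'I_n), val p != val q -> p != q by move=> *; apply: ordne.
have d32 : p3 != p2 by apply: dist; rewrite v3 v2; apply/eqP; lia.
have d31 : p3 != p1 by apply: dist; rewrite v3 v1; apply/eqP; lia.
have d30 : p3 != p0 by apply: dist; rewrite v3 v0; apply/eqP; lia.
have d36 : p3 != p6 by apply: dist; rewrite v3 v6; apply/eqP; lia.
have d21 : p2 != p1 by apply: dist; rewrite v2 v1; apply/eqP; lia.
have d20 : p2 != p0 by apply: dist; rewrite v2 v0; apply/eqP; lia.
have d26 : p2 != p6 by apply: dist; rewrite v2 v6; apply/eqP; lia.
have d10 : p1 != p0 by apply: dist; rewrite v1 v0; apply/eqP; lia.
have d16 : p1 != p6 by apply: dist; rewrite v1 v6; apply/eqP; lia.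
have d06 : p0 != p6 by apply: dist; rewrite v0 v6; apply/eqP; lia.
have d60 : p6 != p0 by rewrite eq_sym.
have e : tc p6 p0 p1 = (tperm p3 p2 * tperm p1 p0) * (tperm p3 p2 * tperm p1 p0) ^ gw.
  rewrite conjMg !tpermJ gw3 gw2 gw1 gw0 ttc //.
  by rewrite (tc_rot d16 d10 d60).
rewrite e; apply: (reach_mul (L1 := 4) (L2 := 12)); first exact: reach_D.
exact: (reach_conj gsV reach_D reach_gw).
Qed.

Lemma reach_cw (w : 'I_n) : val w < a -> reach gs (16 + 2 * a) (tc p6 p0 w).
Proof.
move=> hw.
have e : tc p6 p0 w = (tc p6 p0 p1) ^ (al ^+ (val w).+1).
  have f6 : (al ^+ (val w).+1) p6 = p6 by apply: al_pow_fix; rewrite v6; lia.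
  have f0 : (al ^+ (val w).+1) p0 = p0 by apply: al_pow_fix; rewrite v0; lia.
  rewrite tcJ f6 f0.
  congr tc; apply: val_inj; rewrite expgS permM al_pow_up.
    by move: hw; rewrite alV v1; cnl.
  by move: hw; rewrite alV v1; cnl.
rewrite e; apply: reach_mono (reach_conj gsV reach_K (reach_exp (val w).+1 _)); first lia.
by rewrite !inE eqxx.
Qed.

Lemma reach_tc3 (p q r : 'I_n) : val p < a -> val q < a -> val r < a ->
  p != q -> p != r -> q != r -> reach gs (5 * (16 + 2 * a)) (tc p q r).
Proof.
move=> hp hq hr pq pr qr.
have dist : forall (x y : 'I_n), val x != val y -> x != y by move=> *; apply: ordne.
have d60 : p6 != p0 by apply: dist; rewrite v6 v0; apply/eqP; lia.
have d6 : forall x : 'I_n, val x < a -> p6 != x by move=> x hx; apply: dist; rewrite v6; apply/eqP; lia.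
have d0 : forall x : 'I_n, val x < a -> p0 != x by move=> x hx; apply: dist; rewrite v0; apply/eqP; lia.
have e : tc p q r = ((tc p6 p0 r) ^ (tc p6 p0 q)) ^ (tc p6 p0 p).
  rewrite !tcJ.
  rewrite !(tcE _ d60 (d6 _ hq) (d0 _ hq)) eqxx.
  rewrite (eq_sym p0 p6) (negbTE d60) eqxx.
  rewrite (eq_sym r p6) (negbTE (d6 _ hr)) (eq_sym r p0) (negbTE (d0 _ hr)) (eq_sym r q) (negbTE qr).
  have d0q : p0 != q by apply: d0.
  rewrite !(tcE _ d60 (d6 _ hp) (d0 _ hp)).
  rewrite (eq_sym p0 p6) (negbTE d60) eqxx.
  rewrite (eq_sym q p6) (negbTE (d6 _ hq)) (eq_sym q p0) (negbTE (d0 _ hq)) (eq_sym q p) (negbTE pq).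
  by rewrite (eq_sym r p6) (negbTE (d6 _ hr)) (eq_sym r p0) (negbTE (d0 _ hr)) (eq_sym r p) (negbTE pr).
rewrite e.
apply: reach_mono (reach_conj gsV (reach_conj gsV (reach_cw hr) (reach_cw hq)) (reach_cw hp)); lia.
Qed.

End Pts.


Lemma reach_all (P Q : 'I_n) : val P = 0%N -> val Q = 1%N ->
  forall u, u != P -> u != Q -> reach gs (5 * (16 + 2 * a) + 2 * b) (tc P Q u).
Proof.
move=> vP vQ u uP uQ.
have [p4 v4] := @ex_ord n (a - 4) ltac:(lia).
have [p3 v3] := @ex_ord n (a - 3) ltac:(lia).
have [p2 v2] := @ex_ord n (a - 2) ltac:(lia).
have [p1 v1] := @ex_ord n (a - 1) ltac:(lia).
have [p0 v0] := @ex_ord n a ltac:(lia).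
have [p5 v5] := @ex_ord n (a + 1) ltac:(lia).
have [p6 v6] := @ex_ord n (a + 2) ltac:(lia).
have PQ : P != Q by apply: ordne; rewrite vP vQ.
have hu := ltn_ord u.
case: (ltnP (val u) a) => hua.
  apply: reach_mono (reach_tc3 v4 v3 v2 v1 v0 v5 v6 _ _ hua PQ _ _); first lia.
  - by rewrite vP; lia.
  - by rewrite vQ; lia.
  - by rewrite eq_sym.
  - by rewrite eq_sym.
have P1 : P != p1 by apply: ordne; rewrite vP v1; apply/eqP; lia.
have Q1 : Q != p1 by apply: ordne; rewrite vQ v1; apply/eqP; lia.
have e : tc P Q u = (tc P Q p1) ^ (be ^+ (val u - (a - 1))).
  have fP : (be ^+ (val u - (a - 1))) P = P by apply: be_pow_fix; rewrite vP; lia.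
  have fQ : (be ^+ (val u - (a - 1))) Q = Q by apply: be_pow_fix; rewrite vQ; lia.
  rewrite tcJ fP fQ; congr tc; apply: val_inj.
  by rewrite be_pow_up v1 /=; move: hu hua => /= *; lia.
rewrite e.
have h1 := reach_tc3 v4 v3 v2 v1 v0 v5 v6 (p := P) (q := Q) (r := p1) ltac:(rewrite vP; lia) ltac:(rewrite vQ; lia) ltac:(rewrite v1; lia) PQ P1 Q1.
apply: reach_mono (reach_conj gsV h1 (reach_exp (val u - (a - 1)) _)).
  by move: hu; rewrite /=; lia.
by rewrite !inE eqxx ?orbT.
Qed.

End Conc.

Theorem lemma2 :
  exists K : nat, forall (a b : nat), 4 <= a -> 5 <= b ->
    forall s : {perm 'I_(a + b - 2)}, ~~ odd_perm s ->
      exists w : seq {perm 'I_(a + b - 2)},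
        all (fun g => g \in [:: alpha a b; (alpha a b)^-1; beta a b; (beta a b)^-1]%g) w
        /\ size w <= K * (a + b - 2) ^ 2
        /\ s = (\prod_(g <- w) g)%g.
Proof.
exists 100 => a b ha hb s hs.
have [P vP] := @ex_ord (a + b - 2) 0 ltac:(lia).
have [Q vQ] := @ex_ord (a + b - 2) 1 ltac:(lia).
have PQ : P != Q by apply: ordne; rewrite vP vQ.
have := reduce (gsV (a:=a) (b:=b)) PQ (reach_all ha hb vP vQ) hs.
rewrite card_ord => -[w [h1 [h2 h3]]].
exists w; split => //; split => //.
apply: leq_trans h2 _.
rewrite expnS expn1 mulnA.
apply: leq_mul => //.
lia.
Qed.
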